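(* For every $n\ge 5$, $v(C_n)=v(P_{n-3})+1$, where $C_n$ is the cycle on $n$ vertices and $P_{n-3}$ is the path on $n-3$ vertices.
   Context: Let $K$ be a field and $S$ a standard graded polynomial ring over $K$. For a proper graded ideal $I\subset S$, the $v$-number is $v(I)=\min\{k\ge 0 : \exists f\in S_k,\ \mathcal P\in\operatorname{Ass}(S/I) \text{ with } (I:f)=\mathcal P\}$. For a finite simple graph $G$ whose vertices are the variables of $S$, $I(G)$ is the edge ideal generated by $x_ix_j$ over edges $\{x_i,x_j\}$, and $v(G):=v(I(G))$. The path $P_m$ has vertices $x_1,\dots,x_m$ and edges $\{x_i,x_{i+1}\}$; the cycle $C_n$ has vertices $x_1,\dots,x_n$ and edges $\{x_i,x_{i+1}\}$ ($1\le i\le n-1$) and $\{x_n,x_1\}$. *)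

(* Defs.v *)
From mathcomp Require Import all_boot all_algebra.
From mathcomp Require Import mpoly.
Set Implicit Arguments. Unset Strict Implicit. Unset Printing Implicit Defensive.
Import GRing.Theory.
Local Open Scope ring_scope.

(* Subsets of S = {mpoly K[n]} (variables x_1..x_n are 'X_0 .. 'X_(n-1)). *)
Definition mset (n : nat) (K : fieldType) := {mpoly K[n]} -> Prop.

Definition is_ideal n (K : fieldType) (I : mset n K) : Prop :=
  I 0 /\ (forall p q, I p -> I q -> I (p + q)) /\ (forall r p, I p -> I (r * p)).

Definition is_prime_ideal n (K : fieldType) (P : mset n K) : Prop :=
  is_ideal P /\ ~ P 1 /\ (forall a b, P (a * b) -> P a \/ P b).

Definition colon n (K : fieldType) (I : mset n K) (f : {mpoly K[n]}) : mset n K :=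
  fun g => I (g * f).

Definition same_set n (K : fieldType) (A B : mset n K) : Prop :=
  forall h, A h <-> B h.

(* P in Ass(S/I): P is a prime ideal of the form (I : g) for some g in S *)
Definition is_assoc_prime n (K : fieldType) (I : mset n K) (P : mset n K) : Prop :=
  is_prime_ideal P /\ exists g : {mpoly K[n]}, same_set (colon I g) P.

Definition vnum_cond n (K : fieldType) (I : mset n K) (k : nat) : Prop :=
  exists f : {mpoly K[n]}, f \is k.-homog /\
    exists P : mset n K, is_assoc_prime I P /\ same_set (colon I f) P.

Definition is_vnumber n (K : fieldType) (I : mset n K) (k : nat) : Prop :=
  vnum_cond I k /\ forall k', vnum_cond I k' -> (k <= k')%N.

(* edge ideal of a graph on vertex set 'I_n given by a symmetric irreflexive
   adjacency relation e: the ideal generated by x_i x_j for e i j *)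
Definition edge_ideal n (K : fieldType) (e : rel 'I_n) : mset n K :=
  fun p => exists c : 'I_n -> 'I_n -> {mpoly K[n]},
    p = \sum_(i < n) \sum_(j < n) (if e i j then c i j * ('X_i * 'X_j) else 0).

Definition path_rel (m : nat) : rel 'I_m :=
  fun i j => (i.+1 == j :> nat) || (j.+1 == i :> nat).

Definition cycle_rel (n : nat) : rel 'I_n :=
  fun i j => [|| (i.+1 == j :> nat), (j.+1 == i :> nat),
                 ((i == 0 :> nat) && (j == n.-1 :> nat))
               | ((j == 0 :> nat) && (i == n.-1 :> nat))].

(* Main.v *)
Require Import Defs.
From mathcomp Require Import all_boot all_algebra.
From mathcomp Require Import mpoly.
From mathcomp Require Import zify.
Set Implicit Arguments. Unset Strict Implicit. Unset Printing Implicit Defensive.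
Import GRing.Theory.
Local Open Scope ring_scope.
Section Crit.
Variables (N : nat) (K : fieldType) (e : rel 'I_N).
Hypothesis irr : forall i, e i i = false.

Definition ediv (m : 'X_{1..N}) : bool :=
  [exists i, exists j, [&& e i j, (0 < m i)%N & (0 < m j)%N]].

Lemma eI0 : edge_ideal (K:=K) e 0.
Proof.
exists (fun _ _ => 0); symmetry; apply: big1 => i _; apply: big1 => j _.
by case: (e i j); rewrite ?mul0r.
Qed.

Lemma eID p q : edge_ideal (K:=K) e p -> edge_ideal e q -> edge_ideal e (p + q).
Proof.
rewrite /edge_ideal; move=> [c1 ->] [c2 ->]; exists (fun i j => c1 i j + c2 i j).
rewrite -big_split; apply: eq_bigr => i _; rewrite -big_split; apply: eq_bigr => j _.
by case: (e i j); rewrite /= ?mulrDl ?addr0.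
Qed.

Lemma eIX r i j : e i j -> edge_ideal (K:=K) e (r * ('X_i * 'X_j)).
Proof.
move=> hij; exists (fun a b => if (a == i) && (b == j) then r else 0).
rewrite (bigD1 i) //= (bigD1 j) //= !eqxx hij /=.
rewrite [X in _ + X]big1 => [|a /negbTE ha]; last first.
  by apply: big1 => b _; rewrite ha /=; case: (e a b); rewrite ?mul0r.
rewrite big1 => [|b /negbTE hb]; last by rewrite hb; case: (e i b); rewrite ?mul0r.
by rewrite !addr0.
Qed.

Lemma lem_coefMX (c : {mpoly K[N]}) u m : (c * 'X_[u])@_m != 0 -> (u <= m)%MM.
Proof.
rewrite -mcoeff_msupp (perm_mem (msuppMX c u)) => /mapP [m' _ ->].
exact: lem_addr.
Qed.

Lemma crit1 p : edge_ideal (K:=K) e p -> forall m, ~~ ediv m -> p@_m = 0.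
Proof.
rewrite /edge_ideal; move=> [c ->] m hm; rewrite raddf_sum; apply: big1 => i _.
rewrite raddf_sum; apply: big1 => j _; case hij: (e i j); last exact: raddf0.
apply/eqP; case: eqP => // /eqP; rewrite -mpolyXD => /lem_coefMX /mnm_lepP hle.
exfalso; move/negP: hm; apply.
apply/existsP; exists i; apply/existsP; exists j; rewrite hij /=.
have := hle i; have := hle j; rewrite !mnmDE !mnm1E !eqxx.
move=> h1 h2; apply/andP; split; lia.
Qed.

Lemma crit2 p : (forall m, ~~ ediv m -> p@_m = 0) -> edge_ideal (K:=K) e p.
Proof.
move=> h; rewrite [p]mpolyE; apply: (big_ind (edge_ideal e)).
- exact: eI0.
- exact: eID.
move=> m _; case: (boolP (ediv m)) => [|/h ->]; last by rewrite scale0r; exact: eI0.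
case/existsP => i /existsP [j /and3P [hij hi hj]].
have nij : i != j by apply: contraTneq hij => ->; rewrite irr.
have hle : (U_(i) + U_(j) <= m)%MM.
  apply/mnm_lepP => k; rewrite mnmDE !mnm1E.
  case: (eqVneq i k) => [eik|ik]; case: (eqVneq j k) => [ejk|jk] /=; subst; try lia.
  by rewrite eqxx in nij.
rewrite -(submK hle) mpolyXD mpolyXD scalerAl; exact: eIX.
Qed.

Lemma critXi (f : {mpoly K[N]}) i m : ('X_i * f)@_(m + U_(i)) = f@_m.
Proof. by rewrite mulrC addmC mcoeffMX. Qed.

End Crit.
Section Good.
Variables (N : nat) (K : fieldType) (e : rel 'I_N).
Hypothesis irr : forall i, e i i = false.
Hypothesis sym : forall i j, e i j = e j i.

Definition goodm (m : 'X_{1..N}) := ~~ ediv e m /\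
  forall i j, e i j -> ediv e (m + U_(i)) || ediv e (m + U_(j)).

Lemma vnum_good k : vnum_cond (edge_ideal (K:=K) e) k ->
  exists m, mdeg m = k /\ goodm m.
Proof.
case=> f [hf [P [[[[hP0 [hPD hPM]] [hn1 hpr]] _] hcol]]].
have fI : ~ edge_ideal (K:=K) e f.
  by move=> hfI; apply: hn1; apply/hcol; rewrite /colon mul1r.
case: (boolP (has (fun m => ~~ ediv e m) (msupp f))) => [/hasP [m hm hnd]|hn].
  exists m; split; first by move/dhomogP: hf => /(_ m hm).
  split => // i j hij.
  have : P ('X_i * 'X_j).
    by apply/hcol; rewrite /colon mulrC; exact: eIX.
  case/hpr => /hcol; rewrite /colon mulrC => /crit1 h; apply/orP; [left|right];
    apply: contraT => /h; rewrite addmC mcoeffMX => /eqP; by rewrite mcoeff_eq0 hm.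
exfalso; apply: fI; apply: crit2 => // m hm; apply/eqP; rewrite mcoeff_eq0.
by apply: contra hn => hm'; apply/hasP; exists m.
Qed.

Variable m : 'X_{1..N}.
Hypothesis gm : goodm m.

Definition Cset (i : 'I_N) : bool := [exists a, e i a && (0 < m a)%N].
Definition touch (mm : 'X_{1..N}) : bool := [exists c, Cset c && (0 < mm c)%N].

Lemma L1 u : ediv e (m + U_(u)) -> Cset u.
Proof.
case/existsP => x /existsP [y /and3P [hxy hx hy]].
rewrite !mnmDE !mnm1E in hx hy.
case: (eqVneq u x) => [eux|nux]; case: (eqVneq u y) => [euy|nuy]; subst.
- by rewrite irr in hxy.
- by apply/existsP; exists y; rewrite hxy /=; move: hy; rewrite (negbTE nuy) addn0.
- by apply/existsP; exists x; rewrite sym hxy /=; move: hx; rewrite (negbTE nux) addn0.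
- case: gm => /negP; case; apply/existsP; exists x; apply/existsP; exists y.
  by rewrite hxy /=; move: hx hy; rewrite (negbTE nux) (negbTE nuy) !addn0 => -> ->.
Qed.

Lemma touch_ediv mm : ediv e (mm + m) = touch mm.
Proof.
apply/idP/idP.
  case/existsP => x /existsP [y /and3P [hxy hx hy]].
  rewrite !mnmDE in hx hy.
  case: (posnP (mm x)) => hmx; case: (posnP (mm y)) => hmy.
  - case: gm => /negP; case; apply/existsP; exists x; apply/existsP; exists y.
    by rewrite hxy /=; apply/andP; split; lia.
  - apply/existsP; exists y; rewrite hmy andbT; apply/existsP; exists x.
    rewrite sym hxy /=; lia.
  - apply/existsP; exists x; rewrite hmx andbT; apply/existsP; exists y.
    rewrite hxy /=; lia.
  - case: gm => _ /(_ x y hxy) /orP [/L1 hc|/L1 hc]; apply/existsP.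
      by exists x; rewrite hc.
    by exists y; rewrite hc.
case/existsP => c /andP [/existsP [a /andP [hca hma]] hmc].
apply/existsP; exists c; apply/existsP; exists a; rewrite hca !mnmDE.
apply/andP; split; lia.
Qed.

Definition lq : N.-tuple {mpoly K[N]} :=
  [tuple (if Cset i then 0 else 'X_i) | i < N].

Local Notation Z := (comp_mpoly lq).

Lemma ZX mm : Z 'X_[mm] = if touch mm then 0 else 'X_[mm].
Proof.
rewrite comp_mpolyX; case: (boolP (touch mm)) => [/existsP [c /andP [hc hmc]]|ht].
  rewrite (bigD1 c) //= tnth_mktuple hc expr0n.
  by case: (mm c) hmc => //= k _; rewrite mul0r.
rewrite [RHS]mpolyXE_id; apply: eq_bigr => i _; rewrite tnth_mktuple.
case: ifP => // hc.
have -> : mm i = 0%N.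
  apply/eqP; rewrite -leqn0 leqNgt; apply: contra ht => hmi.
  by apply/existsP; exists i; rewrite hc.
by rewrite !expr0.
Qed.

Lemma Zcoef g mm : ~~ touch mm -> (Z g)@_mm = g@_mm.
Proof.
move=> ht; rewrite comp_mpolyEX [in RHS](mpolyE g) !raddf_sum /=.
apply: eq_bigr => m' _; rewrite !mcoeffZ ZX; case: ifP => // ht'.
rewrite mcoeff0 mcoeffX; case: eqP => [e'|]; last by rewrite mulr0.
by rewrite -e' ht' in ht.
Qed.

Lemma Z0iff g : Z g = 0 <-> forall mm, ~~ touch mm -> g@_mm = 0.
Proof.
split.
  by move=> hz mm ht; rewrite -Zcoef // hz mcoeff0.
move=> h; rewrite comp_mpolyEX big_seq; apply: big1 => m' hm'.
rewrite ZX; case: ifP => ht; first by rewrite scaler0.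
by move: hm'; rewrite mcoeff_msupp h ?eqxx // ht.
Qed.

Definition Pz : mset N K := fun p => Z p = 0.

Lemma Pz_prime : is_prime_ideal Pz.
Proof.
rewrite /Pz; split; [split; [|split]|split].
- exact: raddf0.
- by move=> p q hp hq; rewrite comp_mpolyD hp hq addr0.
- by move=> r p hp; rewrite (comp_mpoly_is_multiplicative lq).1 hp mulr0.
- by rewrite comp_mpoly1; apply/eqP; exact: oner_neq0.
- by move=> a b /eqP; rewrite (comp_mpoly_is_multiplicative lq).1 mulf_eq0 => /orP [/eqP|/eqP]; [left|right].
Qed.

Lemma colon_Pz : same_set (colon (edge_ideal (K:=K) e) 'X_[m]) Pz.
Proof.
move=> h; rewrite /colon /Pz; split.
  move/crit1 => hI; apply/Z0iff => mm ht.
  by rewrite -(mcoeffMX h m mm) hI // addmC touch_ediv.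
move/Z0iff => hz; apply: crit2 => // m' hm'.
apply/eqP; case: eqP => // /eqP hne; exfalso.
have hle := lem_coefMX hne.
move: hne; rewrite -(submK hle) addmC mcoeffMX => hne.
move/negP: hm'; apply; rewrite -(submK hle) touch_ediv.
by apply: contraT => /hz /eqP; rewrite (negbTE hne).
Qed.

Lemma good_vnum : vnum_cond (edge_ideal (K:=K) e) (mdeg m).
Proof.
exists 'X_[m]; split; first by rewrite dhomogX.
exists Pz; split; last exact: colon_Pz.
split; first exact: Pz_prime.
by exists 'X_[m]; exact: colon_Pz.
Qed.

End Good.

Lemma vnumber_of N (K : fieldType) (e : rel 'I_N) k :
  (forall i, e i i = false) -> (forall i j, e i j = e j i) ->
  (exists m, mdeg m = k /\ goodm e m) ->
  (forall m, goodm e m -> (k <= mdeg m)%N) ->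
  is_vnumber (edge_ideal (K:=K) e) k.
Proof.
move=> irr sym [m [<- gm]] hmin; split; first exact: good_vnum.
move=> k' /(vnum_good irr) [m' [<- gm']]; exact: hmin.
Qed.
Local Open Scope nat_scope.
Lemma cyc_key n i (w a : nat) : (4 <= n)%N -> (i <= n)%N -> (a <= n)%N ->
  (w = i \/ w = (if (i < n)%N then i.+1 else 0)) ->
  [|| (w.+1 == a), (a.+1 == w), ((w == 0) && (a == n)) | ((a == 0) && (w == n))] ->
  exists t q, (t < 4)%N /\ a + t + n.+1 - 2 = i + q * n.+1.
Proof.
move=> h4 hi ha hw.
have [hin|hin] := ltnP i n; [rewrite hin in hw | rewrite ltnNge hin /= in hw].
all: case/or4P => [/eqP ?|/eqP ?|/andP [/eqP ? /eqP ?]|/andP [/eqP ? /eqP ?]].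
all: case: hw => ?.
all: first [ (exists 0, 0; lia) | (exists 0, 1; lia) | (exists 1, 0; lia) | (exists 1, 1; lia)
 | (exists 2, 0; lia) | (exists 2, 1; lia) | (exists 3, 0; lia) | (exists 3, 1; lia) | (exists 3, 2; lia) | (exists 2, 2; lia) | (exists 1, 2; lia) | (exists 0, 2; lia)].
Qed.
Section Helpers.
Variables (N : nat) (e : rel 'I_N).
Hypothesis irr : forall i, e i i = false.
Hypothesis sym : forall i j, e i j = e j i.

Definition supp (m : 'X_{1..N}) : seq nat :=
  map val (filter (fun a => (0 < m a)%N) (index_enum 'I_N)).

Lemma size_supp m : (size (supp m) <= mdeg m)%N.
Proof.
rewrite size_map size_filter mdegE.
elim: (index_enum 'I_N) => [|x r ih]; first by rewrite big_nil.
rewrite big_cons /=; case: (posnP (m x)) => hx; rewrite ?hx /=; [by rewrite !add0n | exact: leq_add hx ih].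
Qed.

Lemma in_supp (m : 'X_{1..N}) (a : 'I_N) : (0 < m a)%N -> (val a \in supp m).
Proof. by move=> h; apply: map_f; rewrite mem_filter h mem_index_enum. Qed.

Lemma good_cover (m : 'X_{1..N}) : goodm e m -> forall i j, e i j ->
  exists a, (0 < m a)%N && (e i a || e j a).
Proof.
move=> gm i j /(proj2 gm) /orP [] /(L1 irr sym gm) /existsP [a /andP [h1 h2]];
  exists a; by rewrite h1 h2 ?orbT.
Qed.

Lemma ediv_of (m : 'X_{1..N}) u a : e u a -> (0 < m a)%N -> ediv e (m + U_(u)).
Proof.
move=> hua hma; apply/existsP; exists u; apply/existsP; exists a.
by rewrite hua !mnmDE !mnm1E eqxx /=; apply/andP; split; lia.
Qed.

Lemma good_of (m : 'X_{1..N}) : (forall a b, (0 < m a)%N -> (0 < m b)%N -> e a b = false) ->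
  (forall i j, e i j -> exists a, (0 < m a)%N && (e i a || e j a)) -> goodm e m.
Proof.
move=> hind hcov; split.
  apply/negP => /existsP [a /existsP [b /and3P [hab ha hb]]].
  by rewrite hind in hab.
move=> i j /hcov [a /andP [hma /orP [h|h]]]; apply/orP; [left|right];
  exact: ediv_of h hma.
Qed.

Lemma sumU_mdeg k (x : 'I_k -> 'I_N) : mdeg (\sum_(t < k) U_(x t))%MM = k.
Proof.
rewrite (big_morph mdeg mdegD mdeg0).
under eq_bigr do rewrite mdeg1.
by rewrite sum1_card card_ord.
Qed.

Lemma sumU_pos k (x : 'I_k -> 'I_N) i :
  (0 < (\sum_(t < k) U_(x t))%MM i)%N = [exists t, x t == i].
Proof.
rewrite mnm_sumE; under eq_bigr do rewrite mnm1E.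
apply/idP/existsP.
  move=> h; case: (boolP [exists t, x t == i]) => [/existsP //|/existsPn hn].
  by move: h; rewrite big1 // => t _; rewrite (negbTE (hn t)).
case=> t ht; rewrite (bigD1 t) //= ht; lia.
Qed.

End Helpers.
Lemma path_irr M (i : 'I_M) : path_rel i i = false.
Proof. by apply/negbTE; rewrite /path_rel; lia. Qed.

Lemma path_sym M (i j : 'I_M) : path_rel i j = path_rel j i.
Proof. by rewrite /path_rel orbC. Qed.

Lemma path_lower M (m : 'X_{1..M.+1}) : goodm (@path_rel M.+1) m -> (M+3) %/ 4 <= mdeg m.
Proof.
move=> gm.
have hsub : {subset iota 0 M <= [seq a + t - 2 | a <- supp m, t <- iota 0 4]}.
  move=> i; rewrite mem_iota add0n => /andP [_ hi].
  have hu : i < M.+1 by lia.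
  have hv : i.+1 < M.+1 by lia.
  have he : path_rel (Ordinal hu) (Ordinal hv) by rewrite /path_rel /= eqxx.
  have [a /andP [hma ha]] := good_cover (@path_irr _) (@path_sym _) gm he.
  apply/allpairsP; exists (val a, i + 2 - val a) => /=; split.
  - exact: in_supp.
  - rewrite !inE; move: ha; rewrite /path_rel /=; lia.
  - move: ha; rewrite /path_rel /=; lia.
have := uniq_leq_size (iota_uniq 0 M) hsub.
rewrite size_iota size_allpairs size_iota => h.
have := size_supp m; lia.
Qed.

Lemma path_upper M : 1 <= M ->
  exists m, mdeg m = (M+3)%/4 /\ goodm (@path_rel M.+1) m.
Proof.
move=> hM; set k := (M+3) %/ 4.
pose x := fun t : 'I_k => (inord (minn (4 * t + 2) M) : 'I_M.+1).
have xv : forall t, nat_of_ord (x t) = minn (4*t+2) M by move=> t; rewrite /x inordK //; lia.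
exists (\sum_(t < k) U_(x t))%MM; split; first exact: sumU_mdeg.
apply: good_of => [a b|i j].
  rewrite !sumU_pos => /existsP [t /eqP <-] /existsP [s /eqP <-].
  apply/negbTE; rewrite /path_rel !xv.
  have := ltn_ord t; have := ltn_ord s; rewrite /k; lia.
move=> hij.
have ht : (minn i j) %/ 4 < k.
  move: hij; rewrite /path_rel /k; have := ltn_ord i; have := ltn_ord j; lia.
exists (x (Ordinal ht)); rewrite sumU_pos; apply/andP; split.
  by apply/existsP; exists (Ordinal ht).
move: hij; rewrite /path_rel !xv /=; have := ltn_ord i; have := ltn_ord j; lia.
Qed.
Lemma cyc_irr n (h : 0 < n) (i : 'I_n.+1) : cycle_rel i i = false.
Proof. by apply/negbTE; rewrite /cycle_rel /=; lia. Qed.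

Lemma cyc_sym n (i j : 'I_n) : cycle_rel i j = cycle_rel j i.
Proof. by rewrite /cycle_rel; apply/idP/idP; lia. Qed.

Lemma cyc_lower n (h4 : 4 <= n) (m : 'X_{1..n.+1}) :
  goodm (@cycle_rel n.+1) m -> (n+4) %/ 4 <= mdeg m.
Proof.
move=> gm.
have hsub : {subset iota 0 n.+1 <=
   [seq (a + t + n.+1 - 2) %% n.+1 | a <- supp m, t <- iota 0 4]}.
  move=> i; rewrite mem_iota add0n => /andP [_ hi].
  have hu : i < n.+1 by lia.
  have hv : (if i < n then i.+1 else 0) < n.+1 by case: ifP => //; lia.
  have he : cycle_rel (Ordinal hu) (Ordinal hv).
    by rewrite /cycle_rel /=; case: ifP => ?; lia.
  have [a /andP [hma ha]] :=
    good_cover (@cyc_irr _ (leq_trans (isT : 0 < 4) h4)) (@cyc_sym _) gm he.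
  have han : (a : nat) <= n by have := ltn_ord a; lia.
  have [t [q [ht hq]]] : exists t q, t < 4 /\ a + t + n.+1 - 2 = i + q * n.+1.
    case/orP: ha => ha.
      apply: (cyc_key (w:=i) h4 _ han (or_introl erefl) ha); lia.
    apply: (cyc_key (w:=if i < n then i.+1 else 0) h4 _ han (or_intror erefl) ha); lia.
  apply/allpairsP; exists (nat_of_ord a, t) => /=; split.
  - exact: in_supp.
  - rewrite !inE; lia.
  - by rewrite hq addnC modnMDl modn_small.
have := uniq_leq_size (iota_uniq 0 n.+1) hsub.
rewrite size_iota size_allpairs size_iota => h.
have := size_supp m; lia.
Qed.

Lemma cyc_upper n : 4 <= n ->
  exists m, mdeg m = (n+4)%/4 /\ goodm (@cycle_rel n.+1) m.
Proof.
move=> h4; set k := (n+4) %/ 4.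
pose x := fun t : 'I_k => (inord (minn (4 * t) (n - 1)) : 'I_n.+1).
have xv : forall t, nat_of_ord (x t) = minn (4*t) (n-1).
  by move=> t; rewrite /x inordK //; lia.
exists (\sum_(t < k) U_(x t))%MM; split; first exact: sumU_mdeg.
apply: good_of => [a b|i j].
  rewrite !sumU_pos => /existsP [t /eqP <-] /existsP [s /eqP <-].
  apply/negbTE; rewrite /cycle_rel !xv /=.
  have := ltn_ord t; have := ltn_ord s; rewrite /k; lia.
move=> hij.
have ht : (if (i == n :> nat) || (j == n :> nat) then 0 else (minn i j + 2) %/ 4) < k.
  move: hij; rewrite /cycle_rel /k /=; have := ltn_ord i; have := ltn_ord j.
  case: ifP => [hh|/negbT hh]; lia.
exists (x (Ordinal ht)); rewrite sumU_pos; apply/andP; split.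
  by apply/existsP; exists (Ordinal ht).
move: hij; rewrite /cycle_rel !xv /=; have := ltn_ord i; have := ltn_ord j.
case: ifP => [hh|/negbT hh]; lia.
Qed.
Unset Implicit Arguments.

Theorem proposition3p4 (K : fieldType) (n : nat) (hn : (5 <= n)%N) :
  exists k : nat,
    is_vnumber (@edge_ideal (n - 3)%N K (@path_rel (n - 3)%N)) k /\
    is_vnumber (@edge_ideal n K (@cycle_rel n)) k.+1.
Proof.
case: n hn => [//|n] hn.
have e3 : (n.+1 - 3 = (n - 3).+1)%N by lia.
rewrite e3.
exists ((n - 3 + 3) %/ 4)%N; split.
  apply: vnumber_of; [exact: path_irr | exact: path_sym | | exact: path_lower].
  apply: path_upper; lia.
have -> : ((n - 3 + 3) %/ 4).+1 = (n + 4) %/ 4 by lia.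
apply: vnumber_of; [apply: cyc_irr; lia | exact: cyc_sym | | ].
  apply: cyc_upper; lia.
move=> m; apply: cyc_lower; lia.
Qed.
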